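(* Fix $\beta_1,\beta_2\in(0,\infty)$, $\bar p\in(0,1)$ and set $p_0:=\frac{\bar p}{\bar p+(1-\bar p)\exp(-2d\beta_1)}\in(0,1)$. Then for any finite $\Lambda\subseteq\mathbb{Z}^d_n$ and any $m\in\mathbb{Z}^\Lambda$, $$\langle\cos(m\theta)\rangle_{\mu_{\Lambda,\beta_1,\beta_2,\kappa}}\leq\mathbb{E}_{p_0}\big[\langle\cos(m\theta)\rangle_{\mu_{\Lambda,\beta_1,\beta_2,r}}\big],$$ where $\kappa=\kappa(\bar p)$.
   Context: Fix $n\in\mathbb{N}$. $\mathbb{Z}^d_n$ is the graph obtained from $\mathbb{Z}^d$ by adding $n$ vertices on each edge; vertices of $\mathbb{Z}^d$ are identified with the corresponding vertices of $\mathbb{Z}^d_n$, and $x\sim_n y$ denotes adjacency in $\mathbb{Z}^d_n$. $m\theta:=\sum_{x\in\Lambda}m_x\theta_x$. For $r\in\{0,1\}^\Lambda$ and $\theta\in[0,2\pi)^\Lambda$, $H_{\Lambda,\beta_1,\beta_2}(r,\theta)=-\beta_1\sum_{x\sim_n y,\,x,y\in\Lambda,\,\{x,y\}\cap\mathbb{Z}^d\neq\emptyset}r_xr_y\cos(\theta_x-\theta_y)-\beta_2\sum_{x\sim_n y,\,x,y\in\Lambda,\,\{x,y\}\cap\mathbb{Z}^d=\emptyset}r_xr_y\cos(\theta_x-\theta_y)$. Quenched measure: $\mu_{\Lambda,\beta_1,\beta_2,r}(d\theta)=Z^{-1}e^{-H_{\Lambda,\beta_1,\beta_2}(r,\theta)}\prod_{x\in\Lambda}d\theta_x$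 ($d\theta_x$ uniform on $[0,2\pi)$). Let $\kappa(\bar p)=(\kappa_x)$ with $\kappa_x=(1-\bar p)\delta_0+\bar p\delta_1$ for $x\in\mathbb{Z}^d$ and $\kappa_x=\delta_1$ for $x\in\mathbb{Z}^d_n\setminus\mathbb{Z}^d$; annealed measure: $\mu_{\Lambda,\beta_1,\beta_2,\kappa}(dr\,d\theta)=Z^{-1}e^{-H_{\Lambda,\beta_1,\beta_2}(r,\theta)}\prod_{x\in\Lambda}d\kappa_x(r_x)d\theta_x$. $\mathbb{P}_{\Lambda,p}$ is the product measure on $\{0,1\}^\Lambda$ with $\mathbb{P}(r_x=1)=p$ for $x\in\Lambda\cap\mathbb{Z}^d$ and $\mathbb{P}(r_x=1)=1$ for $x\in\Lambda\setminus\mathbb{Z}^d$; $\mathbb{E}_p$ is its expectation. *)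

(* Defs.v *)
From Stdlib Require Import Reals Lra ZArith List ClassicalDescription.
From Coquelicot Require Import Coquelicot.
Import ListNotations.
Open Scope R_scope.

Definition site := list Z.

Definition add_unit (z : site) (i : nat) : site :=
  firstn i z ++ (nth i z 0%Z + 1)%Z :: skipn (S i) z.

(* Vertices of Z^d_n: either a vertex of Z^d, or the k-th (1 <= k <= n)
   added vertex on the edge {z, z + e_i}, counted from z. *)
Inductive vertex : Type :=
| Site : site -> vertex
| Mid  : site -> nat -> nat -> vertex.

Definition vertex_eq_dec (u v : vertex) : {u = v} + {u <> v}.
Proof. decide equality; try apply Nat.eq_dec; apply list_eq_dec, Z.eq_dec. Defined.

Definition is_site (v : vertex) : bool :=
  match v with Site _ => true | Mid _ _ _ => false end.

Definition valid_vertex (n d : nat) (v : vertex) : Prop :=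
  match v with
  | Site z => length z = d
  | Mid z i k => length z = d /\ (i < d)%nat /\ (1 <= k <= n)%nat
  end.

(* j-th vertex (0 <= j <= n+1) of the subdivided edge {z, z+e_i}. *)
Definition edge_pt (n : nat) (z : site) (i j : nat) : vertex :=
  if Nat.eqb j 0 then Site z
  else if Nat.eqb j (S n) then Site (add_unit z i)
  else Mid z i j.

Definition adj (n d : nat) (u v : vertex) : Prop :=
  exists (z : site) (i j : nat),
    length z = d /\ (i < d)%nat /\ (j <= n)%nat /\
    ((u = edge_pt n z i j /\ v = edge_pt n z i (S j)) \/
     (u = edge_pt n z i (S j) /\ v = edge_pt n z i j)).

Definition sumR {A} (f : A -> R) (l : list A) : R :=
  fold_right (fun a s => f a + s) 0 l.

Definition adjR (n d : nat) (u v : vertex) : R :=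
  if excluded_middle_informative (adj n d u v) then 1 else 0.

(* Sum over unordered edges {x,y} of Z^d_n inside Lambda, written as half of the
   sum over ordered pairs (Lambda has no duplicates). *)
Definition Ham (n d : nat) (Lam : list vertex) (b1 b2 : R)
  (r : vertex -> R) (th : vertex -> R) : R :=
  - (1/2) * sumR (fun x => sumR (fun y =>
        adjR n d x y *
        (if orb (is_site x) (is_site y) then b1 else b2) *
        r x * r y * cos (th x - th y)) Lam) Lam.

Definition upd (f : vertex -> R) (x : vertex) (t : R) : vertex -> R :=
  fun y => if vertex_eq_dec y x then t else f y.

Fixpoint integ (l : list vertex) (F : (vertex -> R) -> R) (th : vertex -> R) : R :=
  match l with
  | [] => F th
  | x :: l' => / (2 * PI) * RInt (fun t => integ l' F (upd th x t)) 0 (2 * PI)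
  end.

Definition theta0 : vertex -> R := fun _ => 0.

(* E_p[G(r)] for r_x ~ Bernoulli(p) independent on the sites in l,
   r_x = 1 elsewhere. *)
Fixpoint bern (p : R) (l : list vertex) (G : (vertex -> R) -> R) (r : vertex -> R) : R :=
  match l with
  | [] => G r
  | x :: l' => p * bern p l' G (upd r x 1) + (1 - p) * bern p l' G (upd r x 0)
  end.

Definition r1 : vertex -> R := fun _ => 1.

Definition Ep (p : R) (Lam : list vertex) (G : (vertex -> R) -> R) : R :=
  bern p (filter is_site Lam) G r1.

Definition cos_m (Lam : list vertex) (m : vertex -> Z) (th : vertex -> R) : R :=
  cos (sumR (fun x => IZR (m x) * th x) Lam).

Definition boltz (n d : nat) (Lam : list vertex) (b1 b2 : R) (r : vertex -> R)
  (th : vertex -> R) : R := exp (- Ham n d Lam b1 b2 r th).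

Definition quenched (n d : nat) (Lam : list vertex) (b1 b2 : R) (r : vertex -> R)
  (f : (vertex -> R) -> R) : R :=
  integ Lam (fun th => boltz n d Lam b1 b2 r th * f th) theta0 /
  integ Lam (fun th => boltz n d Lam b1 b2 r th) theta0.

(* annealed expectation <f>_{mu_{Lambda,b1,b2,kappa(pbar)}} *)
Definition annealed (n d : nat) (Lam : list vertex) (b1 b2 pbar : R)
  (f : (vertex -> R) -> R) : R :=
  Ep pbar Lam (fun r => integ Lam (fun th => boltz n d Lam b1 b2 r th * f th) theta0) /
  Ep pbar Lam (fun r => integ Lam (fun th => boltz n d Lam b1 b2 r th) theta0).

(* Main.v *)
Require Import Defs.
From Stdlib Require Import Reals ZArith List.
Open Scope R_scope.
From Stdlib Require Import Lra Lia FunctionalExtensionality Bool.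
From Coquelicot Require Import Coquelicot.
Import ListNotations.
Open Scope R_scope.

Section BLgen.
Variable X : Type.
Variable close : R -> X -> X -> Prop.
Hypothesis close_nn : forall d a b, close d a b -> 0 <= d.

Definition bnd (F : X -> R) := exists M, forall a, Rabs (F a) <= M.
Definition lip (F : X -> R) := exists L, forall d a b, close d a b -> Rabs (F a - F b) <= L * d.
Definition BL F := bnd F /\ lip F.

Lemma BL_const c : BL (fun _ => c).
Proof. split; [exists (Rabs c); intros; lra| exists 0; intros d a b H;
  replace (c - c) with 0 by ring; rewrite Rabs_R0; lra]. Qed.

Lemma lip_plus F G : lip F -> lip G -> lip (fun a => F a + G a).
Proof. intros [L1 H1] [L2 H2]; exists (L1+L2); intros d a b H.
  specialize (H1 d a b H); specialize (H2 d a b H).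
  replace (F a + G a - (F b + G b)) with ((F a - F b) + (G a - G b)) by ring.
  eapply Rle_trans; [apply Rabs_triang|]; lra. Qed.

Lemma BL_plus F G : BL F -> BL G -> BL (fun a => F a + G a).
Proof. intros [[M1 B1] L1] [[M2 B2] L2]; split; [|now apply lip_plus].
  exists (M1+M2); intros a; eapply Rle_trans; [apply Rabs_triang|].
  specialize (B1 a); specialize (B2 a); lra. Qed.

Lemma lip_scal c F : lip F -> lip (fun a => c * F a).
Proof. intros [L H]; exists (Rabs c * L); intros d a b Hc.
  replace (c * F a - c * F b) with (c * (F a - F b)) by ring.
  rewrite Rabs_mult, Rmult_assoc; apply Rmult_le_compat_l; [apply Rabs_pos|auto]. Qed.

Lemma BL_scal c F : BL F -> BL (fun a => c * F a).
Proof. intros [[M B] L]; split; [|now apply lip_scal].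
  exists (Rabs c * M); intros a; rewrite Rabs_mult;
  apply Rmult_le_compat_l; [apply Rabs_pos|auto]. Qed.

Lemma BL_opp F : BL F -> BL (fun a => - F a).
Proof. intros H. destruct (BL_scal (-1) F H) as [[M B] [L HL]]. split.
  exists M; intros a; specialize (B a); now replace (- F a) with (-1 * F a) by ring.
  exists L; intros d a b Hc; specialize (HL d a b Hc);
  now replace (- F a - - F b) with (-1 * F a - -1 * F b) by ring. Qed.

Lemma BL_minus F G : BL F -> BL G -> BL (fun a => F a - G a).
Proof. intros; apply (BL_plus F (fun a => - G a)); auto; now apply BL_opp. Qed.

Lemma BL_mult F G : BL F -> BL G -> BL (fun a => F a * G a).
Proof. intros [[M1 B1] [L1 H1]] [[M2 B2] [L2 H2]]; split.
  - exists (M1 * M2); intros a; rewrite Rabs_mult.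
    apply Rmult_le_compat; try apply Rabs_pos; auto.
  - exists (M1 * L2 + M2 * L1); intros d a b H.
    specialize (H1 d a b H); specialize (H2 d a b H).
    pose proof (close_nn d a b H).
    replace (F a * G a - F b * G b) with (F a * (G a - G b) + G b * (F a - F b)) by ring.
    eapply Rle_trans; [apply Rabs_triang|]. rewrite !Rabs_mult.
    assert (Rabs (F a) * Rabs (G a - G b) <= M1 * (L2 * d)).
    { apply Rmult_le_compat; try apply Rabs_pos; auto. }
    assert (Rabs (G b) * Rabs (F a - F b) <= M2 * (L1 * d)).
    { apply Rmult_le_compat; try apply Rabs_pos; auto. }
    nra.
Qed.

Lemma exp_lip x y M : Rabs x <= M -> Rabs y <= M -> Rabs (exp x - exp y) <= exp M * Rabs (x - y).
Proof.
  assert (K : forall x y, x <= y -> y <= M -> exp y - exp x <= exp M * (y - x)).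
  { intros u v Huv HvM. pose proof (exp_ineq1_le (u - v)).
    assert (exp u = exp v * exp (u - v)) by (rewrite <- exp_plus; f_equal; ring).
    pose proof (exp_pos v). assert (exp v <= exp M).
    { destruct (Rle_lt_or_eq_dec _ _ HvM); [left; now apply exp_increasing| subst; lra]. }
    nra. }
  intros Hx Hy. apply Rabs_le_between in Hx; apply Rabs_le_between in Hy.
  destruct (Rle_dec x y).
  - rewrite Rabs_minus_sym, Rabs_right by (pose proof (exp_increasing x y); destruct (Rle_lt_or_eq_dec _ _ r); [specialize (H r0)|subst]; lra).
    rewrite Rabs_minus_sym, Rabs_right by lra. apply K; lra.
  - rewrite Rabs_right by (pose proof (exp_increasing y x); lra).
    rewrite Rabs_right by lra. apply K; lra.
Qed.

Lemma BL_exp F : BL F -> BL (fun a => exp (F a)).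
Proof. intros [[M B] [L H]]; split.
  - exists (exp M); intros a; rewrite Rabs_right by (left; apply exp_pos).
    specialize (B a); apply Rabs_le_between in B.
    destruct (Rle_lt_or_eq_dec _ _ (proj2 B)); [left; now apply exp_increasing| rewrite e; lra].
  - exists (exp M * L); intros d a b Hc. eapply Rle_trans; [apply exp_lip; apply B|].
    rewrite Rmult_assoc; apply Rmult_le_compat_l; [left; apply exp_pos| auto]. Qed.

Lemma cos_lip x y : Rabs (cos x - cos y) <= Rabs (x - y).
Proof.
  rewrite <- (Rmult_1_l (Rabs (x - y))).
  apply (bounded_variation cos (fun t => - sin t) 1 y x).
  intros t _; split; [auto_derive; auto; ring|].
  rewrite Rabs_Ropp; apply Rabs_le, SIN_bound.
Qed.

Lemma BL_cos F : lip F -> BL (fun a => cos (F a)).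
Proof. intros [L H]; split.
  - exists 1; intros a; apply Rabs_le, COS_bound.
  - exists L; intros d a b Hc; eapply Rle_trans; [apply cos_lip| auto]. Qed.

Lemma BL_sumR {I} (f : I -> X -> R) (l : list I) :
  (forall i, In i l -> BL (f i)) -> BL (fun a => sumR (fun i => f i a) l).
Proof. induction l as [|i l IH]; intros H; simpl.
  - apply BL_const.
  - apply BL_plus; [apply H; now left| apply IH; intros; apply H; now right]. Qed.

Lemma BL_pow F k : BL F -> BL (fun a => F a ^ k).
Proof. intros H; induction k; simpl; [apply BL_const| now apply BL_mult]. Qed.

Lemma BL_ext F G : (forall a, F a = G a) -> BL F -> BL G.
Proof. intros E; replace G with F; auto; now apply functional_extensionality. Qed.

End BLgen.

Definition closeV (d : R) (a b : vertex -> R) := forall x, Rabs (a x - b x) <= d.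
Lemma closeV_nn d a b : closeV d a b -> 0 <= d.
Proof. intros H; specialize (H (Site nil)); pose proof (Rabs_pos (a (Site nil) - b (Site nil))); lra. Qed.

Definition BLV := BL (vertex -> R) closeV.

Lemma closeV_upd d a b x t : closeV d a b -> closeV d (upd a x t) (upd b x t).
Proof. intros H y; unfold upd; destruct (vertex_eq_dec y x); auto.
  replace (t - t) with 0 by ring; rewrite Rabs_R0; apply (closeV_nn d a b H). Qed.

Lemma closeV_upd2 a x s t : closeV (Rabs (s - t)) (upd a x s) (upd a x t).
Proof. intros y; unfold upd; destruct (vertex_eq_dec y x); [lra|].
  replace (a y - a y) with 0 by ring; rewrite Rabs_R0; apply Rabs_pos. Qed.

Lemma lip_continuous (f : R -> R) K : (forall s t, Rabs (f s - f t) <= K * Rabs (s - t)) ->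
  forall z, continuous f z.
Proof. intros H z. apply continuity_pt_filterlim.
  intros eps Heps. exists (eps / (Rabs K + 1)). split.
  { apply Rdiv_lt_0_compat; [lra| pose proof (Rabs_pos K); lra]. }
  intros x [_ Hx]. simpl in *. unfold Rdist in *.
  eapply Rle_lt_trans; [apply H|].
  pose proof (Rabs_pos K). pose proof (Rabs_pos (x - z)).
  assert (K * Rabs (x - z) <= Rabs K * Rabs (x - z)) by (apply Rmult_le_compat_r; [lra| apply RRle_abs]).
  assert (Rabs K * Rabs (x - z) < eps).
  { apply Rlt_le_trans with ((Rabs K + 1) * (eps / (Rabs K + 1))).
    - destruct (Req_dec (Rabs (x-z)) 0) as [E|E]; [rewrite E; nra|]. 
      apply Rle_lt_trans with ((Rabs K) * (eps / (Rabs K + 1))).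
      apply Rmult_le_compat_l; lra. apply Rmult_lt_compat_r; [apply Rdiv_lt_0_compat; lra| lra].
    - right; field; lra. }
  lra.
Qed.

Lemma ex_RInt_lip (G : (vertex -> R) -> R) L th x :
  (forall d a b, closeV d a b -> Rabs (G a - G b) <= L * d) ->
  ex_RInt (fun t => G (upd th x t)) 0 (2 * PI).
Proof. intros H. apply (@ex_RInt_continuous R_CompleteNormedModule); intros z _.
  apply (lip_continuous _ L). intros s t. apply H, closeV_upd2. Qed.

Lemma PI2_pos : 0 < 2 * PI.
Proof. pose proof PI_RGT_0; lra. Qed.

Lemma RInt_plusR f g a b : ex_RInt f a b -> ex_RInt g a b ->
  RInt (fun x => f x + g x) a b = RInt f a b + RInt g a b.
Proof. intros; exact (RInt_plus f g a b H H0). Qed.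
Lemma RInt_scalR f a b k : ex_RInt f a b -> RInt (fun x => k * f x) a b = k * RInt f a b.
Proof. intros; exact (RInt_scal f a b k H). Qed.
Lemma RInt_constR a b c : RInt (fun _ => c) a b = (b - a) * c.
Proof. exact (RInt_const a b c). Qed.

Lemma integ_bnd_lip l : forall F M L, (forall a, Rabs (F a) <= M) ->
  (forall d a b, closeV d a b -> Rabs (F a - F b) <= L * d) ->
  (forall th, Rabs (integ l F th) <= M) /\
  (forall d a b, closeV d a b -> Rabs (integ l F a - integ l F b) <= L * d).
Proof.
  induction l as [|x l IH]; intros F M L HB HL; simpl; [split; auto|].
  destruct (IH F M L HB HL) as [B1 L1].
  pose proof PI2_pos as P.
  split.
  - intros th. rewrite Rabs_mult, Rabs_right by (left; apply Rinv_0_lt_compat; lra).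
    eapply Rle_trans. apply Rmult_le_compat_l. left; apply Rinv_0_lt_compat; lra.
    apply abs_RInt_le_const. lra. eapply ex_RInt_lip; eauto. intros; apply B1.
    right; field; lra.
  - intros d a b Hc.
    rewrite <- Rmult_minus_distr_l.
    assert (E : RInt (fun t => integ l F (upd a x t)) 0 (2*PI) - RInt (fun t => integ l F (upd b x t)) 0 (2*PI)
      = RInt (fun t => integ l F (upd a x t) + (-1) * integ l F (upd b x t)) 0 (2*PI)).
    { assert (E1 := ex_RInt_lip _ L a x L1). assert (E2 := ex_RInt_lip _ L b x L1).
      rewrite RInt_plusR; auto. rewrite RInt_scalR; auto. ring.
      apply (ex_RInt_scal (V:=R_NormedModule) (fun t => integ l F (upd b x t))) with (k := -1); auto. }
    rewrite E, Rabs_mult, Rabs_right by (left; apply Rinv_0_lt_compat; lra).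
    eapply Rle_trans. apply Rmult_le_compat_l. left; apply Rinv_0_lt_compat; lra.
    apply abs_RInt_le_const with (M := L * d). lra.
    apply (ex_RInt_plus (V:=R_NormedModule) (fun t => integ l F (upd a x t))); [eapply ex_RInt_lip; eauto|].
    apply (ex_RInt_scal (V:=R_NormedModule) (fun t => integ l F (upd b x t))) with (k := -1); eapply ex_RInt_lip; eauto.
    intros t _. replace (integ l F (upd a x t) + -1 * integ l F (upd b x t)) with
      (integ l F (upd a x t) - integ l F (upd b x t)) by ring. apply L1, closeV_upd, Hc.
    right; field; lra.
Qed.

Lemma integ_BL l F : BLV F -> BLV (integ l F).
Proof. intros [[M B] [L H]]. destruct (integ_bnd_lip l F M L B H) as [B' H'].
  split; [exists M | exists L]; auto. Qed.

Lemma ex_RInt_BL l F th x : BLV F -> ex_RInt (fun t => integ l F (upd th x t)) 0 (2*PI).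
Proof. intros HF. destruct (integ_BL l F HF) as [_ [L H]]. eapply ex_RInt_lip; eauto. Qed.

Lemma integ_plus l : forall F G th, BLV F -> BLV G ->
  integ l (fun a => F a + G a) th = integ l F th + integ l G th.
Proof. induction l as [|x l IH]; intros F G th HF HG; simpl; auto.
  rewrite <- Rmult_plus_distr_l, <- RInt_plusR by (apply ex_RInt_BL; auto).
  f_equal. apply RInt_ext; intros; auto. Qed.

Lemma integ_scal l : forall c F th, BLV F -> integ l (fun a => c * F a) th = c * integ l F th.
Proof. induction l as [|x l IH]; intros c F th HF; simpl; auto.
  rewrite (RInt_ext _ (fun t => c * integ l F (upd th x t))) by (intros; auto).
  rewrite RInt_scalR by (apply ex_RInt_BL; auto). ring. Qed.

Lemma integ_const l : forall c th, integ l (fun _ => c) th = c.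
Proof. induction l as [|x l IH]; intros c th; simpl; auto.
  rewrite (RInt_ext _ (fun _ => c)) by (intros; auto). rewrite RInt_constR.
  pose proof PI2_pos; field; lra. Qed.

Lemma integ_le l : forall F G th, BLV F -> BLV G -> (forall a, F a <= G a) ->
  integ l F th <= integ l G th.
Proof. induction l as [|x l IH]; intros F G th HF HG H; simpl; auto.
  pose proof PI2_pos. apply Rmult_le_compat_l; [left; apply Rinv_0_lt_compat; lra|].
  apply RInt_le; try (apply ex_RInt_BL; auto); try lra. intros; apply IH; auto. Qed.

Lemma integ_ext l F G th : (forall a, F a = G a) -> integ l F th = integ l G th.
Proof. intros E; replace G with F; auto; now apply functional_extensionality. Qed.

Lemma integ_minus l F G th : BLV F -> BLV G ->
  integ l (fun a => F a - G a) th = integ l F th - integ l G th.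
Proof. intros HF HG.
  rewrite (integ_ext l _ (fun a => F a + (-1) * G a)) by (intros; ring).
  rewrite integ_plus, integ_scal; auto; [ring|]. now apply BL_scal. Qed.

Lemma integ_close l F G th e : BLV F -> BLV G -> (forall a, Rabs (F a - G a) <= e) ->
  Rabs (integ l F th - integ l G th) <= e.
Proof. intros HF HG H. rewrite <- integ_minus by auto.
  assert (HD : BLV (fun a => F a - G a)) by (apply (BL_minus _ closeV); auto).
  apply Rabs_le. split.
  - rewrite <- (integ_const l (-e) th). apply integ_le; auto. apply BL_const.
    intros a; specialize (H a); apply Rabs_le_between in H; lra.
  - rewrite <- (integ_const l e th). apply integ_le; auto. apply BL_const.
    intros a; specialize (H a); apply Rabs_le_between in H; lra.
Qed.

Lemma sumR_plus {A} (f g : A -> R) l : sumR (fun x => f x + g x) l = sumR f l + sumR g l.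
Proof. induction l; simpl; [ring| rewrite IHl; ring]. Qed.
Lemma sumR_scal {A} c (f : A -> R) l : sumR (fun x => c * f x) l = c * sumR f l.
Proof. induction l; simpl; [ring| rewrite IHl; ring]. Qed.
Lemma sumR_ext {A} (f g : A -> R) l : (forall x, In x l -> f x = g x) -> sumR f l = sumR g l.
Proof. induction l; simpl; intros H; auto. rewrite H, IHl; auto. Qed.
Lemma sumR_le {A} (f g : A -> R) l : (forall x, In x l -> f x <= g x) -> sumR f l <= sumR g l.
Proof. induction l; simpl; intros H; [lra|]. pose proof (H a (or_introl eq_refl)).
  pose proof (IHl (fun x Hx => H x (or_intror Hx))). lra. Qed.
Lemma sumR_nonneg {A} (f : A -> R) l : (forall x, In x l -> 0 <= f x) -> 0 <= sumR f l.
Proof. intros H. replace 0 with (sumR (fun _ : A => 0) l). apply sumR_le; auto.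
  induction l; simpl; auto. rewrite IHl; [ring|]. intros; apply H; now right. Qed.
Lemma sumR_mult_r {A} c (f : A -> R) l : sumR f l * c = sumR (fun x => f x * c) l.
Proof. induction l; simpl; [ring| rewrite <- IHl; ring]. Qed.

Definition lin (Lam : list vertex) (A : vertex -> Z) (th : vertex -> R) : R :=
  sumR (fun x => IZR (A x) * th x) Lam.

Definition zadd (a b : vertex -> Z) : vertex -> Z := fun x => (a x + b x)%Z.
Definition zsub (a b : vertex -> Z) : vertex -> Z := fun x => (a x - b x)%Z.

Lemma lin_add Lam a b th : lin Lam (zadd a b) th = lin Lam a th + lin Lam b th.
Proof. unfold lin, zadd. rewrite <- sumR_plus. apply sumR_ext; intros; rewrite plus_IZR; ring. Qed.
Lemma lin_sub Lam a b th : lin Lam (zsub a b) th = lin Lam a th - lin Lam b th.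
Proof. unfold lin, zsub. replace (sumR (fun x => IZR (a x) * th x) Lam - sumR (fun x => IZR (b x) * th x) Lam)
  with (sumR (fun x => IZR (a x) * th x) Lam + (-1) * sumR (fun x => IZR (b x) * th x) Lam) by ring.
  rewrite <- sumR_scal, <- sumR_plus. apply sumR_ext; intros; rewrite minus_IZR; ring. Qed.

Lemma lin_theta0 Lam A : lin Lam A theta0 = 0.
Proof. unfold lin, theta0. induction Lam; simpl; auto. rewrite IHLam; ring. Qed.

Lemma lin_lip Lam A : forall d a b, closeV d a b ->
  Rabs (lin Lam A a - lin Lam A b) <= sumR (fun x => Rabs (IZR (A x))) Lam * d.
Proof. intros d a b H. unfold lin. induction Lam; simpl.
  - replace (0-0) with 0 by ring. rewrite Rabs_R0. right; ring.
  - replace (IZR (A a0) * a a0 + sumR (fun x : vertex => IZR (A x) * a x) Lam -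
     (IZR (A a0) * b a0 + sumR (fun x : vertex => IZR (A x) * b x) Lam)) with
     (IZR (A a0) * (a a0 - b a0) + (sumR (fun x : vertex => IZR (A x) * a x) Lam -
     sumR (fun x : vertex => IZR (A x) * b x) Lam)) by ring.
    eapply Rle_trans; [apply Rabs_triang|]. rewrite Rabs_mult.
    pose proof (H a0). pose proof (Rabs_pos (IZR (A a0))).
    assert (Rabs (IZR (A a0)) * Rabs (a a0 - b a0) <= Rabs (IZR (A a0)) * d) by (apply Rmult_le_compat_l; auto).
    lra.
Qed.

Lemma BLV_cos_lin Lam A : BLV (fun th => cos (lin Lam A th)).
Proof. apply BL_cos. eexists; apply lin_lip. Qed.

Lemma lin_upd_notin Lam A th x t : ~ In x Lam -> lin Lam A (upd th x t) = lin Lam A th.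
Proof. intros H; unfold lin; apply sumR_ext; intros y Hy; unfold upd.
  destruct (vertex_eq_dec y x); [subst; contradiction| auto]. Qed.

Lemma lin_upd Lam A th x t : NoDup Lam -> In x Lam ->
  lin Lam A (upd th x t) = lin Lam A th + IZR (A x) * (t - th x).
Proof. intros ND; induction ND as [|y l Hy ND IH]; intros Hx; [destruct Hx|].
  unfold lin; simpl. destruct Hx as [<-|Hx].
  - fold (lin l A (upd th y t)); fold (lin l A th). rewrite lin_upd_notin by auto.
    unfold upd; destruct (vertex_eq_dec y y); [|congruence]. ring.
  - fold (lin l A (upd th x t)); fold (lin l A th). rewrite IH by auto.
    unfold upd; destruct (vertex_eq_dec y x); [subst; contradiction|]. ring.
Qed.

Lemma sin_Zperiod c k : sin (c + 2 * IZR k * PI) = sin c.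
Proof.
  destruct (Z_le_gt_dec 0 k).
  - replace k with (Z.of_nat (Z.to_nat k)) by lia. rewrite <- INR_IZR_INZ. apply sin_period.
  - replace k with (- Z.of_nat (Z.to_nat (-k)))%Z by lia. rewrite opp_IZR, <- INR_IZR_INZ.
    set (m := Z.to_nat (-k)). rewrite <- (sin_period (c + 2 * - INR m * PI) m). f_equal; ring.
Qed.

Lemma RInt_cos_k (k : Z) c :
  RInt (fun t => cos (IZR k * t + c)) 0 (2 * PI) = if Z.eqb k 0 then 2 * PI * cos c else 0.
Proof.
  destruct (Z.eqb_spec k 0) as [->|Hk].
  - rewrite (RInt_ext _ (fun _ => cos c)) by (intros; rewrite Rmult_0_l, Rplus_0_l; auto). rewrite RInt_constR; simpl; ring.
  - apply is_RInt_unique.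
    assert (Hk' : IZR k <> 0) by (apply not_0_IZR; auto).
    assert (Hd := is_RInt_derive (fun t => sin (IZR k * t + c) / IZR k) (fun t => cos (IZR k * t + c)) 0 (2*PI)).
    cbv beta in Hd.
    match type of Hd with _ -> _ -> is_RInt _ _ _ ?v => replace v with 0 in Hd end.
    + apply Hd.
      * intros x _. auto_derive; auto. field; auto.
      * intros x _. apply (ex_derive_continuous (K:=R_AbsRing) (V:=R_NormedModule)). auto_derive; auto.
    + unfold minus, plus, opp; simpl.
      replace (IZR k * (2 * PI) + c) with (c + 2 * IZR k * PI) by ring. rewrite sin_Zperiod.
      replace (IZR k * 0 + c) with c by ring. field; auto.
Qed.

Definition allz (l : list vertex) (A : vertex -> Z) : bool := forallb (fun x => Z.eqb (A x) 0) l.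

Lemma integ_cos_lin Lam A : NoDup Lam -> forall l, incl l Lam -> forall th,
  integ l (fun a => cos (lin Lam A a)) th = if allz l A then cos (lin Lam A th) else 0.
Proof.
  intros ND l; induction l as [|x l IH]; intros Hinc th; simpl; auto.
  assert (Hx : In x Lam) by (apply Hinc; now left).
  assert (Hl : incl l Lam) by (intros y Hy; apply Hinc; now right).
  rewrite (RInt_ext _ (fun t => if allz l A then cos (IZR (A x) * t + (lin Lam A th - IZR (A x) * th x)) else 0)).
  2:{ intros t _. rewrite IH by auto. destruct (allz l A); auto. rewrite lin_upd by auto. f_equal; ring. }
  destruct (allz l A).
  - rewrite RInt_cos_k. rewrite andb_true_r. destruct (Z.eqb_spec (A x) 0) as [E|E].
    + rewrite E. pose proof PI2_pos. field_simplify; [|lra]. f_equal. f_equal. ring.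
    + ring.
  - rewrite RInt_constR, andb_false_r. ring.
Qed.

Lemma integ_cos_lin_full Lam A : NoDup Lam ->
  integ Lam (fun a => cos (lin Lam A a)) theta0 = if allz Lam A then 1 else 0.
Proof. intros ND. rewrite integ_cos_lin by (auto; apply incl_refl).
  rewrite lin_theta0, cos_0; auto. Qed.

Definition PP := ((vertex -> R) * (vertex -> R))%type.
Definition close2 (d : R) (p q : PP) := closeV d (fst p) (fst q) /\ closeV d (snd p) (snd q).
Lemma close2_nn d p q : close2 d p q -> 0 <= d.
Proof. intros [H _]; eapply closeV_nn; eauto. Qed.
Definition BL2 := BL PP close2.

Lemma closeV_refl d a : 0 <= d -> closeV d a a.
Proof. intros H x; replace (a x - a x) with 0 by ring; rewrite Rabs_R0; auto. Qed.

Lemma BL2_fst f : BLV f -> BL2 (fun p => f (fst p)).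
Proof. intros [[M B] [L H]]; split; [exists M; auto| exists L; intros d p q [H1 _]; auto]. Qed.
Lemma BL2_snd f : BLV f -> BL2 (fun p => f (snd p)).
Proof. intros [[M B] [L H]]; split; [exists M; auto| exists L; intros d p q [_ H1]; auto]. Qed.

Lemma BL2_slice F a : BL2 F -> BLV (fun b => F (a, b)).
Proof. intros [[M B] [L H]]; split; [exists M; auto| exists L; intros d p q Hc].
  apply H; split; simpl; auto. apply closeV_refl; eapply closeV_nn; eauto. Qed.

Section DIsec.
Variable Lam : list vertex.

Definition DI (F : PP -> R) : R := integ Lam (fun a => integ Lam (fun b => F (a, b)) theta0) theta0.

Lemma integ_abs_le l G th M : BLV G -> (forall a, Rabs (G a) <= M) -> Rabs (integ l G th) <= M.
Proof. intros HG H. replace (integ l G th) with (integ l G th - integ l (fun _ => 0) th)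
  by (rewrite integ_const; ring). apply integ_close; auto. apply BL_const.
  intros a; rewrite Rminus_0_r; auto. Qed.

Lemma BL2_outer F : BL2 F -> BLV (fun a => integ Lam (fun b => F (a, b)) theta0).
Proof. intros HF. pose proof HF as [[M B] [L H]]. split.
  - exists M; intros a. apply integ_abs_le; auto. now apply BL2_slice.
  - exists L; intros d a a' Hc. apply integ_close; try now apply BL2_slice.
    intros b. apply H. split; simpl; auto. apply closeV_refl; eapply closeV_nn; eauto.
Qed.

Lemma DI_plus F G : BL2 F -> BL2 G -> DI (fun p => F p + G p) = DI F + DI G.
Proof. intros HF HG. unfold DI.
  rewrite (integ_ext Lam _ (fun a => integ Lam (fun b => F (a,b)) theta0 + integ Lam (fun b => G (a,b)) theta0)).
  - apply integ_plus; now apply BL2_outer.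
  - intros a. apply integ_plus; now apply BL2_slice.
Qed.

Lemma DI_scal c F : BL2 F -> DI (fun p => c * F p) = c * DI F.
Proof. intros HF. unfold DI.
  rewrite (integ_ext Lam _ (fun a => c * integ Lam (fun b => F (a,b)) theta0)).
  - apply integ_scal; now apply BL2_outer.
  - intros a. apply integ_scal; now apply BL2_slice.
Qed.

Lemma DI_ext F G : (forall p, F p = G p) -> DI F = DI G.
Proof. intros E; replace G with F; auto; now apply functional_extensionality. Qed.

Lemma DI_le F G : BL2 F -> BL2 G -> (forall p, F p <= G p) -> DI F <= DI G.
Proof. intros HF HG H. unfold DI. apply integ_le; try now apply BL2_outer.
  intros a; apply integ_le; try now apply BL2_slice. intros; apply H. Qed.

Lemma DI_const c : DI (fun _ => c) = c.
Proof. unfold DI. rewrite (integ_ext Lam _ (fun _ => c)). apply integ_const. intros; apply integ_const. Qed.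

Lemma DI_sumR {I} (f : I -> PP -> R) (l : list I) : (forall i, In i l -> BL2 (f i)) ->
  DI (fun p => sumR (fun i => f i p) l) = sumR (fun i => DI (f i)) l.
Proof. induction l as [|i l IH]; intros H; simpl.
  - apply DI_const.
  - assert (H1 : BL2 (f i)) by (apply H; now left).
    assert (H2 : BL2 (fun p => sumR (fun i => f i p) l)).
    { apply (BL_sumR PP close2 (fun i p => f i p) l); intros; apply H; now right. }
    rewrite (DI_plus (f i) (fun p => sumR (fun i => f i p) l) H1 H2).
    rewrite IH; auto. intros; apply H; now right.
Qed.

Lemma DI_sep f g : BLV f -> BLV g -> DI (fun p => f (fst p) * g (snd p)) =
  integ Lam f theta0 * integ Lam g theta0.
Proof. intros Hf Hg. unfold DI; simpl.
  rewrite (integ_ext Lam _ (fun a => f a * integ Lam g theta0)).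
  - rewrite (integ_ext Lam _ (fun a => integ Lam g theta0 * f a)) by (intros; ring).
    rewrite integ_scal; auto; ring.
  - intros a. apply integ_scal; auto.
Qed.

Lemma DI_minus F G : BL2 F -> BL2 G -> DI (fun p => F p - G p) = DI F - DI G.
Proof. intros HF HG. rewrite (DI_ext _ (fun p => F p + (-1) * G p)) by (intros; ring).
  rewrite DI_plus, DI_scal; auto; [ring|]. now apply BL_scal. Qed.

End DIsec.

Definition sg (b : bool) : R := if b then 1 else -1.
Lemma sg_sq b : sg b * sg b = 1.
Proof. destruct b; simpl; ring. Qed.

Definition fac := ((vertex -> Z) * bool)%type.

Section Gin.
Variable Lam : list vertex.
Hypothesis ND : NoDup Lam.

Definition cl1 (A : vertex -> Z) (p : PP) := cos (lin Lam A (fst p)).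
Definition cl2 (A : vertex -> Z) (p : PP) := cos (lin Lam A (snd p)).

Definition gf (f : fac) (p : PP) : R := cl1 (fst f) p + sg (snd f) * cl2 (fst f) p.
Definition GP (L : list fac) (p : PP) : R := fold_right (fun f acc => gf f p * acc) 1 L.

Fixpoint gfun (L : list fac) (c : vertex -> Z) : R :=
  match L with
  | [] => if allz Lam c then 1 else 0
  | f :: L' => gfun L' (zadd c (fst f)) + sg (snd f) * gfun L' (zsub c (fst f))
  end.

Lemma BL2_cl1 A : BL2 (cl1 A).
Proof. apply (BL2_fst (fun a => cos (lin Lam A a))), BLV_cos_lin. Qed.
Lemma BL2_cl2 A : BL2 (cl2 A).
Proof. apply (BL2_snd (fun a => cos (lin Lam A a))), BLV_cos_lin. Qed.

Lemma BL2_gf f : BL2 (gf f).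
Proof. unfold gf. apply (BL_plus PP close2). apply BL2_cl1. apply (BL_scal PP close2), BL2_cl2. Qed.

Lemma BL2_GP L : BL2 (GP L).
Proof. induction L; simpl. apply BL_const. unfold GP; simpl.
  apply (BL_mult PP close2 close2_nn); [apply BL2_gf| apply IHL]. Qed.

Lemma BL2_mul F G : BL2 F -> BL2 G -> BL2 (fun p => F p * G p).
Proof. apply (BL_mult PP close2 close2_nn). Qed.

Lemma allz_pm l a b : allz l (zadd a b) && allz l (zsub a b) = allz l a && allz l b.
Proof. induction l as [|x l IH]; simpl; auto.
  assert (K : Z.eqb (zadd a b x) 0 && Z.eqb (zsub a b x) 0 = Z.eqb (a x) 0 && Z.eqb (b x) 0).
  { unfold zadd, zsub. destruct (Z.eqb_spec (a x + b x) 0); destruct (Z.eqb_spec (a x - b x) 0);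
    destruct (Z.eqb_spec (a x) 0); destruct (Z.eqb_spec (b x) 0); simpl; auto; lia. }
  fold (allz l (zadd a b)) (allz l (zsub a b)) (allz l a) (allz l b).
  revert K IH. generalize (allz l (zadd a b)) (allz l (zsub a b)) (allz l a) (allz l b)
    (Z.eqb (zadd a b x) 0) (Z.eqb (zsub a b x) 0) (Z.eqb (a x) 0) (Z.eqb (b x) 0).
  intros [] [] [] [] [] [] [] []; simpl; congruence.
Qed.

Lemma fz1 a b A : zadd (zadd a A) b = zadd (zadd a b) A.
Proof. apply functional_extensionality; intros; unfold zadd; lia. Qed.
Lemma fz2 a b A : zsub (zadd a A) b = zadd (zsub a b) A.
Proof. apply functional_extensionality; intros; unfold zadd, zsub; lia. Qed.
Lemma fz3 a b A : zadd (zsub a A) b = zsub (zadd a b) A.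
Proof. apply functional_extensionality; intros; unfold zadd, zsub; lia. Qed.
Lemma fz4 a b A : zsub (zsub a A) b = zsub (zsub a b) A.
Proof. apply functional_extensionality; intros; unfold zadd, zsub; lia. Qed.
Lemma fz5 a b A : zadd a (zadd b A) = zadd (zadd a b) A.
Proof. apply functional_extensionality; intros; unfold zadd; lia. Qed.
Lemma fz6 a b A : zsub a (zadd b A) = zsub (zsub a b) A.
Proof. apply functional_extensionality; intros; unfold zadd, zsub; lia. Qed.
Lemma fz7 a b A : zadd a (zsub b A) = zsub (zadd a b) A.
Proof. apply functional_extensionality; intros; unfold zadd, zsub; lia. Qed.
Lemma fz8 a b A : zsub a (zsub b A) = zadd (zsub a b) A.
Proof. apply functional_extensionality; intros; unfold zadd, zsub; lia. Qed.

Theorem gin_id L : forall a b,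
  DI Lam (fun p => GP L p * cl1 a p * cl2 b p) =
  (/2) ^ (length L) * gfun L (zadd a b) * gfun L (zsub a b).
Proof.
  induction L as [|[A s] L IH]; intros a b.
  - simpl. rewrite (DI_ext Lam _ (fun p => cos (lin Lam a (fst p)) * cos (lin Lam b (snd p))))
      by (intros; unfold cl1, cl2; ring).
    rewrite (DI_sep Lam (fun u => cos (lin Lam a u)) (fun u => cos (lin Lam b u))) by apply BLV_cos_lin.
    rewrite !integ_cos_lin_full by auto.
    pose proof (allz_pm Lam a b) as K. revert K.
    destruct (allz Lam (zadd a b)); destruct (allz Lam (zsub a b));
    destruct (allz Lam a); destruct (allz Lam b); simpl; intros K; try discriminate; ring.
  - set (G := GP L).
    assert (HG : BL2 G) by apply BL2_GP.
    rewrite (DI_ext Lam _ (fun p =>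
       /2 * (G p * cl1 (zadd a A) p * cl2 b p) + /2 * (G p * cl1 (zsub a A) p * cl2 b p)
     + ((/2 * sg s) * (G p * cl1 a p * cl2 (zadd b A) p) + (/2 * sg s) * (G p * cl1 a p * cl2 (zsub b A) p)))).
    2:{ intros p. unfold GP; simpl; fold (GP L p); fold G. unfold gf, cl1, cl2; simpl.
        rewrite !lin_add, !lin_sub, !cos_plus, !cos_minus. field. }
    assert (B : forall c d, BL2 (fun p => G p * cl1 c p * cl2 d p)).
    { intros; apply BL2_mul; [apply BL2_mul; auto; apply BL2_cl1| apply BL2_cl2]. }
    rewrite DI_plus; [| apply (BL_plus PP close2); apply (BL_scal PP close2); apply B
                      | apply (BL_plus PP close2); apply (BL_scal PP close2); apply B].
    rewrite !DI_plus by (apply (BL_scal PP close2); apply B).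
    rewrite !DI_scal by apply B.
    unfold G; rewrite !IH.
    rewrite (fz1 a b A), (fz2 a b A), (fz3 a b A), (fz4 a b A), (fz5 a b A), (fz6 a b A), (fz7 a b A), (fz8 a b A).
    simpl. destruct s; simpl; ring.
Qed.

Lemma lin_zero l A : (forall x, A x = 0%Z) -> forall th, lin l A th = 0.
Proof. intros H th; unfold lin. induction l as [|y l IH]; simpl; auto. rewrite H, IH; ring. Qed.

Theorem ginibre L : 0 <= DI Lam (GP L).
Proof.
  set (z := fun _ : vertex => 0%Z).
  rewrite (DI_ext Lam _ (fun p => GP L p * cl1 z p * cl2 z p)).
  2:{ intros p; unfold cl1, cl2; rewrite !lin_zero by auto. rewrite cos_0; ring. }
  rewrite gin_id.
  replace (zsub z z) with (zadd z z) by (apply functional_extensionality; intros; unfold zadd, zsub, z; lia).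
  rewrite Rmult_assoc. apply Rmult_le_pos. apply pow_le; lra. apply Rle_0_sqr.
Qed.

End Gin.

Fixpoint tay (n : nat) (y : R) : R :=
  match n with
  | O => 1
  | S m => tay m y + / INR (fact (S m)) * y ^ S m
  end.

Lemma tay_sum n y : tay n y = sum_f_R0 (fun i => / INR (fact i) * y ^ i) n.
Proof. induction n; simpl; [field|rewrite IHn; auto]. Qed.

Lemma tay_diff C y K : Rabs y <= C -> forall n, (K <= n)%nat ->
  Rabs (tay n y - tay K y) <= tay n C - tay K C.
Proof. intros Hy n Hn. induction Hn.
  - replace (tay K y - tay K y) with 0 by ring; rewrite Rabs_R0; lra.
  - change (tay (S m) y) with (tay m y + / INR (fact (S m)) * y ^ S m).
    change (tay (S m) C) with (tay m C + / INR (fact (S m)) * C ^ S m).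
    replace (tay m y + / INR (fact (S m)) * y ^ S m - tay K y) with
      ((tay m y - tay K y) + / INR (fact (S m)) * y ^ S m) by ring.
    eapply Rle_trans; [apply Rabs_triang|].
    rewrite Rabs_mult, <- RPow_abs.
    rewrite (Rabs_right (/ INR (fact (S m)))) by (left; apply Rinv_0_lt_compat, lt_0_INR, lt_O_fact).
    assert (/ INR (fact (S m)) * Rabs y ^ S m <= / INR (fact (S m)) * C ^ S m).
    { apply Rmult_le_compat_l. left; apply Rinv_0_lt_compat, lt_0_INR, lt_O_fact.
      apply pow_incr. split; [apply Rabs_pos| auto]. }
    lra.
Qed.

Lemma exp_tay_unif C eps : 0 < eps -> exists K, forall y, Rabs y <= C -> Rabs (exp y - tay K y) <= eps.
Proof.
  intros He.
  destruct (proj2_sig (exist_exp C) (eps/3)) as [K HK]; [lra|].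
  exists K. intros y Hy.
  destruct (proj2_sig (exist_exp y) (eps/3)) as [N HN]; [lra|].
  set (n := Nat.max N K).
  pose proof (HK K (le_n K)) as HK0.
  specialize (HK n (Nat.le_max_r N K)). specialize (HN n (Nat.le_max_l N K)).
  fold (exp C) in HK, HK0. fold (exp y) in HN.
  unfold Rdist in *. rewrite <- !tay_sum in *.
  pose proof (tay_diff C y K Hy n (Nat.le_max_r N K)).
  apply Rabs_def2 in HK. apply Rabs_def2 in HK0. apply Rabs_def2 in HN.
  replace (exp y - tay K y) with ((exp y - tay n y) + (tay n y - tay K y)) by ring.
  eapply Rle_trans; [apply Rabs_triang|]. rewrite Rabs_minus_sym with (y := tay n y).
  assert (Rabs (tay n y - exp y) < eps/3) by (apply Rabs_def1; lra).
  lra.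
Qed.

Section Pos.
Variable Lam : list vertex.
Hypothesis ND : NoDup Lam.
Variable Jl : list (R * fac).
Hypothesis Jpos : forall j, In j Jl -> 0 <= fst j.

Definition Sf (p : PP) : R := sumR (fun j => fst j * gf Lam (snd j) p) Jl.

Lemma BL2_Sf : BL2 Sf.
Proof. unfold Sf. apply (BL_sumR PP close2 (fun j p => fst j * gf Lam (snd j) p)).
  intros; apply (BL_scal PP close2), BL2_gf. Qed.

Lemma pow_pos k : forall L, 0 <= DI Lam (fun p => GP Lam L p * Sf p ^ k).
Proof.
  induction k; intros L.
  - rewrite (DI_ext Lam _ (GP Lam L)) by (intros; simpl; ring). apply ginibre; auto.
  - rewrite (DI_ext Lam _ (fun p => sumR (fun j => fst j * (GP Lam (snd j :: L) p * Sf p ^ k)) Jl)).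
    2:{ intros p. simpl. replace (GP Lam L p * (Sf p * Sf p ^ k)) with (Sf p * (GP Lam L p * Sf p ^ k)) by ring.
        unfold Sf at 1. rewrite sumR_mult_r. apply sumR_ext; intros j _. unfold GP; simpl. ring. }
    rewrite DI_sumR.
    + apply sumR_nonneg. intros j Hj. rewrite DI_scal. apply Rmult_le_pos; auto.
      apply BL2_mul; [apply BL2_GP| apply (BL_pow PP close2 close2_nn), BL2_Sf].
    + intros j _. apply (BL_scal PP close2), BL2_mul; [apply BL2_GP| apply (BL_pow PP close2 close2_nn), BL2_Sf].
Qed.

Lemma BL2_tay n : BL2 (fun p => tay n (Sf p)).
Proof. induction n; simpl. apply BL_const. apply (BL_plus PP close2); auto.
  apply (BL_scal PP close2). apply (BL_pow PP close2 close2_nn (fun p => Sf p) (S n)), BL2_Sf. Qed.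

Lemma tay_pos n L : 0 <= DI Lam (fun p => GP Lam L p * tay n (Sf p)).
Proof.
  induction n; simpl.
  - rewrite (DI_ext Lam _ (GP Lam L)) by (intros; ring). apply ginibre; auto.
  - rewrite (DI_ext Lam _ (fun p => GP Lam L p * tay n (Sf p) + / INR (fact (S n)) * (GP Lam L p * Sf p ^ S n)))
      by (intros; simpl; ring).
    rewrite DI_plus, DI_scal.
    + pose proof (pow_pos (S n) L).
      assert (0 <= / INR (fact (S n))) by (left; apply Rinv_0_lt_compat, lt_0_INR, lt_O_fact).
      apply Rplus_le_le_0_compat; auto. apply Rmult_le_pos; auto.
    + apply BL2_mul; [apply BL2_GP| apply (BL_pow PP close2 close2_nn), BL2_Sf].
    + apply BL2_mul; [apply BL2_GP| apply BL2_tay].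
    + apply (BL_scal PP close2), BL2_mul; [apply BL2_GP| apply (BL_pow PP close2 close2_nn), BL2_Sf].
Qed.

Theorem expS_pos L : 0 <= DI Lam (fun p => GP Lam L p * exp (Sf p)).
Proof.
  destruct (BL2_GP Lam L) as [[M0 HM] _].
  destruct BL2_Sf as [[C HC] _].
  set (M := Rabs M0 + 1).
  assert (HM' : forall p, Rabs (GP Lam L p) <= M) by (intros p; specialize (HM p); unfold M; pose proof (Rle_abs M0); lra).
  assert (Mpos : 0 < M) by (unfold M; pose proof (Rabs_pos M0); lra).
  set (X := DI Lam (fun p => GP Lam L p * exp (Sf p))).
  assert (Key : forall eps, 0 < eps -> - (M * eps) <= X).
  { intros eps He. destruct (exp_tay_unif C eps He) as [K HK].
    unfold X. rewrite (DI_ext Lam _ (fun p => GP Lam L p * tay K (Sf p) + GP Lam L p * (exp (Sf p) - tay K (Sf p))))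
      by (intros; ring).
    rewrite DI_plus.
    - pose proof (tay_pos K L).
      assert (- (M * eps) <= DI Lam (fun p => GP Lam L p * (exp (Sf p) - tay K (Sf p)))).
      { rewrite <- (DI_const Lam (- (M * eps))). apply DI_le. apply BL_const.
        apply BL2_mul; [apply BL2_GP| apply (BL_minus PP close2); [apply (BL_exp PP close2), BL2_Sf| apply BL2_tay]].
        intros p. specialize (HK (Sf p) (HC p)). specialize (HM' p).
        assert (Rabs (GP Lam L p * (exp (Sf p) - tay K (Sf p))) <= M * eps).
        { rewrite Rabs_mult. apply Rmult_le_compat; auto; apply Rabs_pos. }
        apply Rabs_le_between in H0. lra. }
      lra.
    - apply BL2_mul; [apply BL2_GP| apply BL2_tay].
    - apply BL2_mul; [apply BL2_GP| apply (BL_minus PP close2); [apply (BL_exp PP close2), BL2_Sf| apply BL2_tay]]. }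
  destruct (Rle_dec 0 X); auto.
  specialize (Key (- X / (2 * M))). 
  assert (0 < - X / (2 * M)) by (apply Rdiv_lt_0_compat; lra).
  specialize (Key H). replace (M * (- X / (2 * M))) with (- X / 2) in Key by (field; lra). lra.
Qed.

End Pos.

Lemma sumR_app {A} (f : A -> R) l1 l2 : sumR f (l1 ++ l2) = sumR f l1 + sumR f l2.
Proof. induction l1; simpl; [ring| rewrite IHl1; ring]. Qed.
Lemma sumR_flat_map {A B} (f : B -> R) (g : A -> list B) l :
  sumR f (flat_map g l) = sumR (fun a => sumR f (g a)) l.
Proof. induction l; simpl; auto. rewrite sumR_app, IHl; auto. Qed.
Lemma sumR_map {A B} (f : B -> R) (g : A -> B) l : sumR f (map g l) = sumR (fun a => f (g a)) l.
Proof. induction l; simpl; auto. rewrite IHl; auto. Qed.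
Lemma sumR_list_prod {A B} (f : A * B -> R) l1 l2 :
  sumR f (list_prod l1 l2) = sumR (fun a => sumR (fun b => f (a, b)) l2) l1.
Proof. induction l1; simpl; auto. rewrite sumR_app, IHl1, sumR_map; auto. Qed.

Definition ind (x : vertex) : vertex -> Z := fun v => if vertex_eq_dec v x then 1%Z else 0%Z.
Definition ed (x y : vertex) : vertex -> Z := zsub (ind x) (ind y).

Lemma lin_ind Lam x th : NoDup Lam -> In x Lam -> lin Lam (ind x) th = th x.
Proof. intros ND; induction ND as [|y l Hy ND IH]; intros Hx; [destruct Hx|].
  unfold lin, ind; simpl. destruct (vertex_eq_dec y x) as [->|E].
  - replace (sumR (fun x0 => IZR (if vertex_eq_dec x0 x then 1%Z else 0%Z) * th x0) l) with 0. ring.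
    symmetry. rewrite <- (lin_zero l (fun _ => 0%Z) (fun _ => eq_refl) th). unfold lin.
    apply sumR_ext. intros z Hz. destruct (vertex_eq_dec z x); [subst; contradiction| auto].
  - destruct Hx as [->|Hx]; [congruence|]. change (sumR _ l) with (lin l (ind x) th). rewrite IH; auto. ring.
Qed.

Lemma lin_ed Lam x y th : NoDup Lam -> In x Lam -> In y Lam -> lin Lam (ed x y) th = th x - th y.
Proof. intros. unfold ed. rewrite lin_sub, !lin_ind; auto. Qed.

Section Model.
Variables (n d : nat) (Lam : list vertex) (b1 b2 : R).
Hypothesis ND : NoDup Lam.
Hypothesis hb1 : 0 <= b1.
Hypothesis hb2 : 0 <= b2.

Definition coef (x y : vertex) : R := if orb (is_site x) (is_site y) then b1 else b2.
Definition wgt (r : vertex -> R) (x y : vertex) : R := / 2 * (adjR n d x y * coef x y * r x * r y).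

Lemma adjR_nn x y : 0 <= adjR n d x y.
Proof. unfold adjR; destruct ClassicalDescription.excluded_middle_informative; lra. Qed.
Lemma coef_nn x y : 0 <= coef x y.
Proof. unfold coef; destruct orb; lra. Qed.

Lemma mHam r th : - Ham n d Lam b1 b2 r th =
  sumR (fun x => sumR (fun y => wgt r x y * cos (lin Lam (ed x y) th)) Lam) Lam.
Proof.
  unfold Ham. replace (- (- (1 / 2) * sumR (fun x => sumR (fun y => adjR n d x y *
        (if (is_site x || is_site y)%bool then b1 else b2) * r x * r y * cos (th x - th y)) Lam) Lam))
    with (/ 2 * sumR (fun x => sumR (fun y => adjR n d x y *
        (if (is_site x || is_site y)%bool then b1 else b2) * r x * r y * cos (th x - th y)) Lam) Lam) by field.
  rewrite <- sumR_scal. apply sumR_ext; intros x Hx. rewrite <- sumR_scal. apply sumR_ext; intros y Hy.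
  rewrite lin_ed by auto. unfold wgt, coef. ring.
Qed.

Lemma BLV_mHam r : BLV (fun th => sumR (fun x => sumR (fun y => wgt r x y * cos (lin Lam (ed x y) th)) Lam) Lam).
Proof. apply (BL_sumR _ closeV (fun x th => sumR (fun y => wgt r x y * cos (lin Lam (ed x y) th)) Lam)).
  intros x _. apply (BL_sumR _ closeV (fun y th => wgt r x y * cos (lin Lam (ed x y) th))).
  intros y _. apply (BL_scal _ closeV), BLV_cos_lin. Qed.

Lemma BLV_boltz r : BLV (boltz n d Lam b1 b2 r).
Proof. apply (BL_ext _ closeV (fun th => exp (sumR (fun x => sumR (fun y => wgt r x y * cos (lin Lam (ed x y) th)) Lam) Lam))).
  intros th; unfold boltz; rewrite mHam; auto. apply (BL_exp _ closeV), BLV_mHam. Qed.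

Lemma BLV_cosm m : BLV (cos_m Lam m).
Proof. apply (BLV_cos_lin Lam m). Qed.

Definition Nq r m := integ Lam (fun th => boltz n d Lam b1 b2 r th * cos_m Lam m th) theta0.
Definition Zq r := integ Lam (fun th => boltz n d Lam b1 b2 r th) theta0.

Lemma Zq_pos r : 0 < Zq r.
Proof. destruct (BLV_mHam r) as [[M HM] _].
  apply Rlt_le_trans with (exp (- M)); [apply exp_pos|].
  unfold Zq. rewrite <- (integ_const Lam (exp (- M)) theta0) at 1.
  apply integ_le. apply BL_const. apply BLV_boltz.
  intros a. unfold boltz. rewrite mHam. specialize (HM a). apply Rabs_le_between in HM.
  destruct (Rle_lt_or_eq_dec _ _ (proj1 HM)); [left; apply exp_increasing; auto| rewrite e; lra].
Qed.

Definition Jlist (r r' : vertex -> R) : list (R * fac) :=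
  flat_map (fun xy => [((wgt r (fst xy) (snd xy) + wgt r' (fst xy) (snd xy)) / 2, (ed (fst xy) (snd xy), true));
                       ((wgt r' (fst xy) (snd xy) - wgt r (fst xy) (snd xy)) / 2, (ed (fst xy) (snd xy), false))])
    (list_prod Lam Lam).

Lemma Sf_J r r' p : Sf Lam (Jlist r r') p = - Ham n d Lam b1 b2 r' (fst p) + - Ham n d Lam b1 b2 r (snd p).
Proof.
  unfold Sf, Jlist. rewrite sumR_flat_map, sumR_list_prod, !mHam, <- sumR_plus.
  apply sumR_ext; intros x _. rewrite <- sumR_plus. apply sumR_ext; intros y _.
  simpl. unfold gf, cl1, cl2; simpl. field.
Qed.

Lemma wgt_mono r r' x y : (forall v, 0 <= r v <= r' v) -> 0 <= wgt r x y <= wgt r' x y.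
Proof. intros H. unfold wgt. pose proof (adjR_nn x y). pose proof (coef_nn x y).
  destruct (H x), (H y).
  assert (0 <= r x * r y) by nra. assert (r x * r y <= r' x * r' y) by nra.
  assert (0 <= adjR n d x y * coef x y) by nra.
  split; nra. Qed.

Theorem q_mono r r' m : (forall v, 0 <= r v <= r' v) -> Nq r m * Zq r' <= Nq r' m * Zq r.
Proof.
  intros H.
  assert (Jp : forall j, In j (Jlist r r') -> 0 <= fst j).
  { intros j Hj. unfold Jlist in Hj. apply in_flat_map in Hj as [[x y] [_ Hj]].
    simpl in Hj. destruct (wgt_mono r r' x y H).
    destruct Hj as [<-|[<-|[]]]; simpl; lra. }
  pose proof (expS_pos Lam ND (Jlist r r') Jp [(m, false)]) as P.
  rewrite (DI_ext Lam _ (fun p => (boltz n d Lam b1 b2 r' (fst p) * cos_m Lam m (fst p)) * boltz n d Lam b1 b2 r (snd p)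
     - boltz n d Lam b1 b2 r' (fst p) * (boltz n d Lam b1 b2 r (snd p) * cos_m Lam m (snd p)))) in P.
  2:{ intros p. rewrite Sf_J, exp_plus. unfold GP, gf, cl1, cl2, boltz, cos_m, lin; simpl. ring. }
  rewrite DI_minus in P.
  - rewrite (DI_sep Lam (fun a => boltz n d Lam b1 b2 r' a * cos_m Lam m a) (boltz n d Lam b1 b2 r)) in P.
    rewrite (DI_sep Lam (boltz n d Lam b1 b2 r') (fun a => boltz n d Lam b1 b2 r a * cos_m Lam m a)) in P.
    unfold Nq, Zq. change (fun th => boltz n d Lam b1 b2 r th) with (boltz n d Lam b1 b2 r). change (fun th => boltz n d Lam b1 b2 r' th) with (boltz n d Lam b1 b2 r'). lra.
    apply BLV_boltz. apply (BL_mult _ closeV closeV_nn); [apply BLV_boltz| apply BLV_cosm].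
    apply (BL_mult _ closeV closeV_nn); [apply BLV_boltz| apply BLV_cosm]. apply BLV_boltz.
  - apply BL2_mul. apply (BL2_fst (fun a => boltz n d Lam b1 b2 r' a * cos_m Lam m a)).
    apply (BL_mult _ closeV closeV_nn); [apply BLV_boltz| apply BLV_cosm].
    apply (BL2_snd (boltz n d Lam b1 b2 r)), BLV_boltz.
  - apply BL2_mul. apply (BL2_fst (boltz n d Lam b1 b2 r')), BLV_boltz.
    apply (BL2_snd (fun a => boltz n d Lam b1 b2 r a * cos_m Lam m a)).
    apply (BL_mult _ closeV closeV_nn); [apply BLV_boltz| apply BLV_cosm].
Qed.

End Model.

Definition sub_unit (z : site) (i : nat) : site :=
  firstn i z ++ (nth i z 0 - 1)%Z :: skipn (S i) z.

Lemma sub_add z i : (i < length z)%nat -> sub_unit (add_unit z i) i = z.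
Proof.
  revert z; induction i as [|i IH]; intros [|a z] H; simpl in *; try lia.
  - unfold sub_unit, add_unit; simpl. f_equal. lia.
  - unfold sub_unit, add_unit in *; simpl. f_equal. apply IH. lia.
Qed.

Definition nbl (n d : nat) (z0 : site) : list vertex :=
  map (fun i => edge_pt n z0 i 1) (seq 0 d) ++ map (fun i => edge_pt n (sub_unit z0 i) i n) (seq 0 d).

Lemma adj_in_nbl n d z0 v : adj n d (Site z0) v -> In v (nbl n d z0).
Proof.
  intros [z [i [j [Hl [Hi [Hj [[E1 E2]|[E1 E2]]]]]]]]; unfold nbl; apply in_app_iff.
  - left. unfold edge_pt in E1. destruct (Nat.eqb_spec j 0).
    + inversion E1; subst. apply in_map_iff. exists i; split; auto. apply in_seq; lia.
    + destruct (Nat.eqb_spec j (S n)); [lia| discriminate].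
  - right. unfold edge_pt in E1. simpl in E1. destruct (Nat.eqb_spec j n); [|discriminate].
    inversion E1; subst. apply in_map_iff. exists i; split; [| apply in_seq; lia].
    rewrite sub_add by lia. auto.
Qed.

Lemma length_nbl n d z0 : length (nbl n d z0) = (2 * d)%nat.
Proof. unfold nbl. rewrite length_app, !length_map, length_seq. lia. Qed.

Lemma adj_sym n d u v : adj n d u v -> adj n d v u.
Proof. intros [z [i [j [Hl [Hi [Hj [[E1 E2]|[E1 E2]]]]]]]]; exists z, i, j; repeat split; auto. Qed.

Lemma adjR_sym n d u v : adjR n d u v = adjR n d v u.
Proof. unfold adjR. destruct (ClassicalDescription.excluded_middle_informative (adj n d u v)) as [A|A];
  destruct (ClassicalDescription.excluded_middle_informative (adj n d v u)) as [B|B]; auto;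
  exfalso; [apply B| apply A]; now apply adj_sym. Qed.

Lemma sumR_ind (f : vertex -> bool) l : sumR (fun v => if f v then 1 else 0) l = INR (length (filter f l)).
Proof. induction l; simpl; auto. rewrite IHl. destruct (f a); simpl length; [rewrite S_INR|]; ring. Qed.

Lemma count_nb n d z0 Lam : NoDup Lam -> sumR (fun v => adjR n d (Site z0) v) Lam <= 2 * INR d.
Proof.
  intros ND. set (C := nbl n d z0).
  set (f := fun v => if in_dec vertex_eq_dec v C then true else false).
  apply Rle_trans with (sumR (fun v => if f v then 1 else 0) Lam).
  - apply sumR_le. intros v _. unfold adjR, f.
    destruct (ClassicalDescription.excluded_middle_informative (adj n d (Site z0) v)) as [A|A].
    + destruct (in_dec vertex_eq_dec v C); [lra| exfalso; apply n0, adj_in_nbl, A].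
    + destruct (in_dec vertex_eq_dec v C); lra.
  - rewrite sumR_ind. replace (2 * INR d) with (INR (length C)) by (unfold C; rewrite length_nbl, mult_INR; simpl; ring).
    apply le_INR. apply NoDup_incl_length. apply NoDup_filter; auto.
    intros v Hv. apply filter_In in Hv as [_ Hv]. unfold f in Hv. destruct in_dec; auto; discriminate.
Qed.

Lemma sumR_minus {A} (f g : A -> R) l : sumR (fun x => f x - g x) l = sumR f l - sumR g l.
Proof. induction l; simpl; [ring| rewrite IHl; ring]. Qed.

Definition dlt (u x : vertex) : R := if vertex_eq_dec u x then 1 else 0.

Lemma sumR_delta (g : vertex -> R) l x : NoDup l -> In x l -> sumR (fun u => dlt u x * g u) l = g x.
Proof. intros ND; induction ND as [|y l Hy ND IH]; intros Hx; [destruct Hx|]. simpl. unfold dlt at 1.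
  destruct (vertex_eq_dec y x) as [->|E].
  - replace (sumR (fun u => dlt u x * g u) l) with 0. ring.
    symmetry. replace 0 with (sumR (fun _ : vertex => 0) l).
    + apply sumR_ext; intros u Hu; unfold dlt; destruct (vertex_eq_dec u x); [subst; contradiction| ring].
    + clear. induction l; simpl; auto. rewrite IHl; ring.
  - destruct Hx as [->|Hx]; [congruence|]. rewrite IH; auto. ring.
Qed.

Section Ratio.
Variables (n d : nat) (Lam : list vertex) (b1 b2 : R).
Hypothesis ND : NoDup Lam.
Hypothesis hb1 : 0 <= b1.
Hypothesis hb2 : 0 <= b2.

Lemma term_bound r x u v c : (forall w, 0 <= r w <= 1) -> is_site x = true -> Rabs c <= 1 ->
  (wgt n d b1 b2 (upd r x 1) u v - wgt n d b1 b2 (upd r x 0) u v) * c <=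
  / 2 * adjR n d u v * b1 * (dlt u x + dlt v x).
Proof.
  intros Hr Hx Hc. apply Rabs_le_between in Hc. pose proof (adjR_nn n d u v) as Ha.
  unfold wgt, coef, dlt, upd.
  destruct (vertex_eq_dec u x) as [->|Eu]; destruct (vertex_eq_dec v x) as [->|Ev];
    rewrite ?Hx; simpl; rewrite ?orb_true_r.
  - assert (0 <= adjR n d x x * b1) by nra. nra.
  - destruct (Hr v). assert (0 <= adjR n d x v * b1) by nra. 
    assert (r v * c <= 1) by nra.
    assert (adjR n d x v * b1 * (r v * c) <= adjR n d x v * b1 * 1) by (apply Rmult_le_compat_l; lra). nra.
  - destruct (Hr u). assert (0 <= adjR n d u x * b1) by nra.
    assert (r u * c <= 1) by nra.
    assert (adjR n d u x * b1 * (r u * c) <= adjR n d u x * b1 * 1) by (apply Rmult_le_compat_l; lra). nra.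
  - assert (0 <= adjR n d u v * b1) by nra. nra.
Qed.

Lemma ham_diff r x th : (forall w, 0 <= r w <= 1) -> is_site x = true -> In x Lam ->
  - Ham n d Lam b1 b2 (upd r x 1) th <= - Ham n d Lam b1 b2 (upd r x 0) th + 2 * INR d * b1.
Proof.
  intros Hr Hx Hin. rewrite !(mHam n d Lam b1 b2 ND).
  destruct x as [z0| ]; [|discriminate].
  set (x := Site z0) in *.
  assert (Hsum : sumR (fun u => sumR (fun v => wgt n d b1 b2 (upd r x 1) u v * cos (lin Lam (ed u v) th)) Lam) Lam
     - sumR (fun u => sumR (fun v => wgt n d b1 b2 (upd r x 0) u v * cos (lin Lam (ed u v) th)) Lam) Lam
     <= sumR (fun u => sumR (fun v => / 2 * adjR n d u v * b1 * (dlt u x + dlt v x)) Lam) Lam).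
  { replace (sumR (fun u => sumR (fun v => wgt n d b1 b2 (upd r x 1) u v * cos (lin Lam (ed u v) th)) Lam) Lam
     - sumR (fun u => sumR (fun v => wgt n d b1 b2 (upd r x 0) u v * cos (lin Lam (ed u v) th)) Lam) Lam)
    with (sumR (fun u => sumR (fun v => (wgt n d b1 b2 (upd r x 1) u v - wgt n d b1 b2 (upd r x 0) u v) * cos (lin Lam (ed u v) th)) Lam) Lam).
    2:{ rewrite <- sumR_minus. apply sumR_ext; intros u _. rewrite <- sumR_minus.
        apply sumR_ext; intros v _. ring. }
    apply sumR_le; intros u _; apply sumR_le; intros v _. apply term_bound; auto.
    apply Rabs_le, COS_bound. }
  assert (Hb : sumR (fun u => sumR (fun v => / 2 * adjR n d u v * b1 * (dlt u x + dlt v x)) Lam) Lam <= 2 * INR d * b1).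
  { rewrite (sumR_ext _ (fun u => dlt u x * (/2 * b1 * sumR (fun v => adjR n d u v) Lam) + /2 * b1 * sumR (fun v => dlt v x * adjR n d u v) Lam)).
    2:{ intros u _. rewrite <- (sumR_scal (/2 * b1) (fun v => adjR n d u v)).
        rewrite <- (sumR_scal (dlt u x)). rewrite <- (sumR_scal (/2 * b1) (fun v => dlt v x * adjR n d u v)).
        rewrite <- sumR_plus. apply sumR_ext; intros v _. ring. }
    rewrite (sumR_plus (fun u => dlt u x * (/2 * b1 * sumR (fun v => adjR n d u v) Lam)) (fun u => /2 * b1 * sumR (fun v => dlt v x * adjR n d u v) Lam)).
    rewrite (sumR_delta (fun u => / 2 * b1 * sumR (fun v => adjR n d u v) Lam)) by auto.
    rewrite sumR_scal.
    rewrite (sumR_ext (fun u => sumR (fun v => dlt v x * adjR n d u v) Lam) (fun u => adjR n d x u)).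
    2:{ intros u _. rewrite (sumR_delta (fun v => adjR n d u v)) by auto. apply adjR_sym. }
    pose proof (count_nb n d z0 Lam ND). fold x in H. nra. }
  lra.
Qed.

Lemma Zq_ratio r x : (forall w, 0 <= r w <= 1) -> is_site x = true -> In x Lam ->
  Zq n d Lam b1 b2 (upd r x 1) <= exp (2 * INR d * b1) * Zq n d Lam b1 b2 (upd r x 0).
Proof.
  intros Hr Hx Hin. unfold Zq.
  rewrite <- integ_scal by (apply BLV_boltz; auto).
  apply integ_le. apply BLV_boltz; auto. apply (BL_scal _ closeV), BLV_boltz; auto.
  intros th. unfold boltz. rewrite <- exp_plus.
  pose proof (ham_diff r x th Hr Hx Hin).
  destruct (Rle_lt_or_eq_dec _ _ H); [left; apply exp_increasing; lra| right; f_equal; lra].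
Qed.

End Ratio.

Definition bin (r : vertex -> R) := forall v, r v = 0 \/ r v = 1.

Lemma bin_upd r x b : bin r -> b = 0 \/ b = 1 -> bin (upd r x b).
Proof. intros H Hb v; unfold upd; destruct vertex_eq_dec; auto. Qed.

Lemma upd_comm r x y b c : x <> y -> upd (upd r x b) y c = upd (upd r y c) x b.
Proof. intros H; apply functional_extensionality; intros v; unfold upd.
  destruct (vertex_eq_dec v y); destruct (vertex_eq_dec v x); subst; auto; congruence. Qed.

Lemma bern_upd_comm p l x b : ~ In x l -> forall G r,
  bern p l G (upd r x b) = bern p l (fun r' => G (upd r' x b)) r.
Proof. induction l as [|y l IH]; intros Hx G r; simpl; auto.
  assert (y <> x) by (intros ->; apply Hx; now left).
  assert (~ In x l) by (intros H'; apply Hx; now right).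
  rewrite !upd_comm with (x := x) (y := y) by auto. rewrite !IH; auto. Qed.

Lemma bern_mono p l : 0 <= p <= 1 -> forall G H r, (forall r', bin r' -> G r' <= H r') -> bin r ->
  bern p l G r <= bern p l H r.
Proof. intros Hp; induction l as [|y l IH]; intros G H r HGH Hr; simpl; auto.
  assert (bern p l G (upd r y 1) <= bern p l H (upd r y 1)) by (apply IH; auto; apply bin_upd; auto).
  assert (bern p l G (upd r y 0) <= bern p l H (upd r y 0)) by (apply IH; auto; apply bin_upd; auto).
  nra. Qed.

Lemma bern_pos p l : 0 <= p <= 1 -> forall G r, (forall r', bin r' -> 0 < G r') -> bin r -> 0 < bern p l G r.
Proof. intros Hp; induction l as [|y l IH]; intros G r HG Hr; simpl; auto.
  assert (0 < bern p l G (upd r y 1)) by (apply IH; auto; apply bin_upd; auto).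
  assert (0 < bern p l G (upd r y 0)) by (apply IH; auto; apply bin_upd; auto).
  destruct (Req_dec p 0); [subst; nra|]. nra. Qed.

Lemma bern_ext p l G H r : (forall r', G r' = H r') -> bern p l G r = bern p l H r.
Proof. intros E; replace H with G; auto; now apply functional_extensionality. Qed.

Lemma bern_scal p l c G r : bern p l (fun r => c * G r) r = c * bern p l G r.
Proof. revert r; induction l as [|y l IH]; intros r; simpl; auto. rewrite !IH; ring. Qed.

Lemma dom pb p0 rho (Z f : (vertex -> R) -> R) : 0 <= pb <= 1 -> 0 <= p0 <= 1 -> 0 <= rho ->
  pb * rho * (1 - p0) <= p0 * (1 - pb) ->
  (forall r, bin r -> 0 < Z r) ->
  forall l, NoDup l ->
  (forall r x, In x l -> bin r -> f (upd r x 0) <= f (upd r x 1)) ->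
  (forall r x, In x l -> bin r -> Z (upd r x 1) <= rho * Z (upd r x 0)) ->
  forall r, bin r -> bern pb l (fun r => Z r * f r) r <= bern p0 l f r * bern pb l Z r.
Proof.
  intros Hpb Hp0 Hrho Hcond HZ l ND. induction ND as [|x l Hx ND IH]; intros hf hR r Hr; simpl; [lra|].
  assert (hf' : forall r x, In x l -> bin r -> f (upd r x 0) <= f (upd r x 1)) by (intros; apply hf; auto; now right).
  assert (hR' : forall r x, In x l -> bin r -> Z (upd r x 1) <= rho * Z (upd r x 0)) by (intros; apply hR; auto; now right).
  assert (B1 : bin (upd r x 1)) by (apply bin_upd; auto).
  assert (B0 : bin (upd r x 0)) by (apply bin_upd; auto).
  pose proof (IH hf' hR' _ B1) as X1. pose proof (IH hf' hR' _ B0) as X0.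
  set (g1 := bern p0 l f (upd r x 1)) in *. set (g0 := bern p0 l f (upd r x 0)) in *.
  set (Z1 := bern pb l Z (upd r x 1)) in *. set (Z0 := bern pb l Z (upd r x 0)) in *.
  assert (Hg : g0 <= g1).
  { unfold g0, g1. rewrite !bern_upd_comm by auto. apply bern_mono; auto.
    intros r' Hr'. apply hf; auto; now left. }
  assert (HZr : Z1 <= rho * Z0).
  { unfold Z1, Z0. rewrite !bern_upd_comm by auto. rewrite <- bern_scal.
    apply bern_mono; auto. intros r' Hr'. apply hR; auto; now left. }
  assert (HZ0 : 0 < Z0) by (apply bern_pos; auto).
  assert (HZ1 : 0 < Z1) by (apply bern_pos; auto).
  set (K := p0 * (1 - pb) * Z0 - (1 - p0) * pb * Z1).
  assert (HK : 0 <= K).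
  { unfold K. assert ((1 - p0) * pb * Z1 <= (1 - p0) * pb * (rho * Z0)) by (apply Rmult_le_compat_l; nra).
    assert (pb * rho * (1 - p0) * Z0 <= p0 * (1 - pb) * Z0) by (apply Rmult_le_compat_r; lra).
    nra. }
  assert (0 <= (g1 - g0) * K) by (apply Rmult_le_pos; lra).
  assert (pb * bern pb l (fun r => Z r * f r) (upd r x 1) <= pb * (g1 * Z1)) by (apply Rmult_le_compat_l; lra).
  assert ((1 - pb) * bern pb l (fun r => Z r * f r) (upd r x 0) <= (1 - pb) * (g0 * Z0)) by (apply Rmult_le_compat_l; lra).
  replace ((p0 * g1 + (1 - p0) * g0) * (pb * Z1 + (1 - pb) * Z0)) with
    (pb * (g1 * Z1) + (1 - pb) * (g0 * Z0) + (g1 - g0) * K) by (unfold K; ring).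
  lra.
Qed.

Lemma div_le_cross x y a b : 0 < a -> 0 < b -> x * b <= y * a -> x / a <= y / b.
Proof. intros Ha Hb H. apply (Rmult_le_reg_r (a * b)); [nra|].
  replace (x / a * (a * b)) with (x * b) by (field; lra).
  replace (y / b * (a * b)) with (y * a) by (field; lra). auto. Qed.

Theorem proposition5p1 (n d : nat) (b1 b2 pbar : R)
  (hb1 : 0 < b1) (hb2 : 0 < b2) (hp : 0 < pbar < 1)
  (Lam : list vertex) (hnd : NoDup Lam)
  (hval : forall v, In v Lam -> valid_vertex n d v)
  (m : vertex -> Z) :
  let p0 := pbar / (pbar + (1 - pbar) * exp (- (2 * INR d * b1))) in
  annealed n d Lam b1 b2 pbar (cos_m Lam m)
  <= Ep p0 Lam (fun r => quenched n d Lam b1 b2 r (cos_m Lam m)).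
Proof.
  intros p0.
  set (c := 2 * INR d * b1).
  set (rho := exp c).
  assert (Hee : exp c * exp (- c) = 1) by (rewrite <- exp_plus; replace (c + - c) with 0 by ring; apply exp_0).
  assert (He : 0 < exp (- c)) by apply exp_pos.
  assert (Hprod : 0 < (1 - pbar) * exp (- c)) by (apply Rmult_lt_0_compat; lra).
  assert (HD : 0 < pbar + (1 - pbar) * exp (- c)) by lra.
  assert (Hp0 : 0 <= p0 <= 1).
  { unfold p0; fold c. split. apply Rlt_le, Rdiv_lt_0_compat; lra.
    apply (Rmult_le_reg_r (pbar + (1 - pbar) * exp (- c))); [lra|].
    unfold Rdiv. rewrite Rmult_assoc, Rinv_l by lra. lra. }
  assert (Hcond : pbar * rho * (1 - p0) <= p0 * (1 - pbar)).
  { right. unfold p0, rho; fold c. rewrite exp_Ropp in *.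
    assert (E0 : 0 < exp c) by apply exp_pos.
    assert (E1 : 0 < pbar * exp c + (1 - pbar)) by nra.
    field. split; lra. }
  set (S := filter is_site Lam).
  assert (NDS : NoDup S) by (apply NoDup_filter; auto).
  set (Zf := Zq n d Lam b1 b2).
  set (f := fun r => quenched n d Lam b1 b2 r (cos_m Lam m)).
  assert (HZ : forall r, bin r -> 0 < Zf r) by (intros; apply Zq_pos; auto).
  assert (Zpos : forall r, 0 < Zf r) by (intros; apply Zq_pos; auto).
  assert (Hbin1 : bin r1) by (intros v; right; reflexivity).
  assert (Hdom := dom pbar p0 rho Zf f ltac:(lra) Hp0 ltac:(unfold rho; left; apply exp_pos) Hcond HZ S NDS).
  assert (Hf : forall r x, In x S -> bin r -> f (upd r x 0) <= f (upd r x 1)).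
  { intros r x Hx Hr. unfold f, quenched.
    pose proof (q_mono n d Lam b1 b2 hnd ltac:(lra) ltac:(lra) (upd r x 0) (upd r x 1) m) as Q.
    unfold Nq, Zq in Q.
    assert (Z0 := Zpos (upd r x 0)). assert (Z1 := Zpos (upd r x 1)). unfold Zf, Zq in Z0, Z1.
    apply div_le_cross; auto.
    apply Q. intros v. unfold upd. destruct vertex_eq_dec; [lra|]. destruct (Hr v); lra. }
  assert (HR : forall r x, In x S -> bin r -> Zf (upd r x 1) <= rho * Zf (upd r x 0)).
  { intros r x Hx Hr. apply filter_In in Hx as [Hx Hs]. unfold Zf, rho, c.
    apply Zq_ratio; auto; try lra. intros w; destruct (Hr w); lra. }
  specialize (Hdom Hf HR r1 Hbin1).
  unfold annealed, Ep. fold S.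
  set (B := bern pbar S (fun r => integ Lam (fun th => boltz n d Lam b1 b2 r th) theta0) r1).
  assert (HB : B = bern pbar S Zf r1) by reflexivity.
  assert (HBpos : 0 < B) by (rewrite HB; apply bern_pos; auto; lra).
  rewrite (bern_ext pbar S _ (fun r => Zf r * f r)).
  2:{ intros r. unfold f, quenched, Zf, Zq. field. pose proof (Zpos r). unfold Zf, Zq in H. lra. }
  fold f. rewrite <- HB in Hdom.
  apply (Rmult_le_reg_r B); auto. unfold Rdiv. rewrite Rmult_assoc, Rinv_l by lra. lra.
Qed.
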